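(* Let $a,b,c$ be positive numbers with $a<b<c$, $b-a<c_0<a$, $0<c_1<2a-b$ and $\lfloor c/b\rfloor\ge2$, where $c_0=c-\lfloor c/b\rfloor b$ and $c_1=\lfloor c/b\rfloor b-\lfloor\lfloor c/b\rfloor b/a\rfloor a$. Then $\mathcal S_{a,b,c}=\emptyset$ if and only if for every $t\in\mathbb R$ there exists $t_0\in[c_0+a-b,c_0)$ such that $$\lim_{n\to\infty}\frac1n\sum_{k=0}^{n-1}f\big((R_{a,b,c})^k(t)\big)=f(t_0)$$ for every continuous $a$-periodic function $f:\mathbb R\to\mathbb C$.
   Context: For $a,b,c>0$ and $t\in\mathbb R$, $\mathbf M_{a,b,c}(t)=(\chi_{[0,c)}(t-\mu+\lambda))_{\mu\in a\mathbb Z,\lambda\in b\mathbb Z}$ is the infinite matrix with rows indexed by $a\mathbb Z$ and columns by $b\mathbb Z$, acting by $(\mathbf M_{a,b,c}(t)\mathbf x)(\mu)=\sum_{\lambda\in b\mathbb Z}\chi_{[0,c)}(t-\mu+\lambda)\mathbf x(\lambda)$. $\mathcal B_b^0$ is the set of vectors $(\mathbf x(\lambda))_{\lambda\in b\mathbb Z}$ with entries in $\{0,1\}$ and $\mathbf x(0)=1$. $\mathbf 1$ denotes the vector indexed by $a\mathbb Z$ with all entries $1$. $\mathcal S_{a,b,c}=\{t:\mathbf M_{a,b,c}(t)\mathbf x=\mathbf 1\text{ for some }\mathbf x\in\mathcal B_b^0\}$. $R_{a,b,c}(t)=t+\lfloor c/b\rfloor b+b$ if $t\in[0,c_0+a-b)+a\mathbb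 Z$, $R_{a,b,c}(t)=t$ if $t\in[c_0+a-b,c_0)+a\mathbb Z$, $R_{a,b,c}(t)=t+\lfloor c/b\rfloor b$ if $t\in[c_0,a)+a\mathbb Z$; $(R_{a,b,c})^k$ is the $k$-fold iterate. $A+a\mathbb Z=\{x+ak:x\in A,k\in\mathbb Z\}$. *)

(* Defs.v *)
From Stdlib Require Import Reals Lra Lia ZArith.
Open Scope R_scope.

Definition Rfloor (x : R) : Z := (up x - 1)%Z.

Definition chi0c (c x : R) : R :=
  if Rle_dec 0 x then (if Rlt_dec x c then 1 else 0) else 0.

(* entry (M_{a,b,c}(t))_{mu,lambda} with mu = a*m, lambda = b*k *)
Definition Mentry (a b c t : R) (m k : Z) : R :=
  chi0c c (t - a * IZR m + b * IZR k).

Definition symsum (g : Z -> R) (N : nat) : R :=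
  sum_f_R0 (fun i => g (Z.of_nat i - Z.of_nat N)%Z) (2 * N).

(* (M x)(a m) = v : the series over b Z (whose terms vanish for all but
   finitely many k) converges to v *)
Definition Mapply_eq (a b c t : R) (x : Z -> R) (m : Z) (v : R) : Prop :=
  Un_cv (symsum (fun k => Mentry a b c t m k * x k)) v.

(* B_b^0 : vectors indexed by b Z (lambda = b k) with entries in {0,1}, x(0)=1 *)
Definition in_B0 (x : Z -> R) : Prop :=
  (forall k, x k = 0 \/ x k = 1) /\ x 0%Z = 1.

Definition in_S (a b c t : R) : Prop :=
  exists x, in_B0 x /\ forall m : Z, Mapply_eq a b c t x m 1.

Definition c0 (b c : R) : R := c - IZR (Rfloor (c / b)) * b.

Definition modR (a t : R) : R := t - a * IZR (Rfloor (t / a)).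

Definition Rmap (a b c t : R) : R :=
  let r := modR a t in
  let q := IZR (Rfloor (c / b)) * b in
  if Rlt_dec r (c0 b c + a - b) then t + q + b
  else if Rlt_dec r (c0 b c) then t
  else t + q.

Definition Cplx := (R * R)%type.

Definition cont_C (f : R -> Cplx) : Prop :=
  continuity (fun x => fst (f x)) /\ continuity (fun x => snd (f x)).

Definition periodic_C (a : R) (f : R -> Cplx) : Prop :=
  forall x, f (x + a) = f x.

(* (1/n) sum_{k=0}^{n-1} g k, for n >= 1 (sequence indexed by n-1) *)
Definition cesaro (g : nat -> R) (n : nat) : R :=
  sum_f_R0 g n / INR (S n).

Definition cesaro_lim_C (f : R -> Cplx) (T : nat -> R) (z : Cplx) : Prop :=
  Un_cv (cesaro (fun k => fst (f (T k)))) (fst z) /\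
  Un_cv (cesaro (fun k => snd (f (T k)))) (snd z).

(* Main.v *)
Require Import Defs.
From Stdlib Require Import Reals Lia ZArith Psatz Classical ClassicalEpsilon Lra.
Open Scope R_scope.


Lemma Rfloor_spec x : IZR (Rfloor x) <= x < IZR (Rfloor x) + 1.
Proof.
  unfold Rfloor. destruct (archimed x) as [H1 H2].
  rewrite minus_IZR. simpl. lra.
Qed.

Lemma Rfloor_unique x n : IZR n <= x < IZR n + 1 -> Rfloor x = n.
Proof.
  intros [H1 H2]. destruct (Rfloor_spec x) as [H3 H4].
  assert (A : (Rfloor x < n + 1)%Z).
  { apply lt_IZR. rewrite plus_IZR. simpl. lra. }
  assert (B : (n < Rfloor x + 1)%Z).
  { apply lt_IZR. rewrite plus_IZR. simpl. lra. }
  lia.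
Qed.

Lemma modR_spec a x : 0 < a -> 0 <= modR a x < a /\ x = modR a x + a * IZR (Rfloor (x / a)).
Proof.
  intros Ha. unfold modR. destruct (Rfloor_spec (x / a)) as [H1 H2].
  set (F := IZR (Rfloor (x / a))) in *.
  assert (E : x = a * (x / a)) by (field; lra).
  assert (a * F <= a * (x / a)) by (apply Rmult_le_compat_l; lra).
  assert (a * (x / a) < a * (F + 1)) by (apply Rmult_lt_compat_l; lra).
  split; [split|]; lra.
Qed.

Lemma modR_charac a x y n : 0 < a -> 0 <= y < a -> x = y + a * IZR n -> modR a x = y.
Proof.
  intros Ha Hy E. unfold modR.
  assert (Rfloor (x / a) = n) as ->.
  { apply Rfloor_unique. subst x.
    replace ((y + a * IZR n) / a) with (y / a + IZR n) by (field; lra).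
    assert (0 <= y / a < 1).
    { split. apply Rmult_le_pos; [lra| left; apply Rinv_0_lt_compat; lra].
      apply (Rmult_lt_reg_r a); [lra|]. replace (y / a * a) with y by (field; lra). lra. }
    lra. }
  lra.
Qed.

Lemma modR_shift a x n : 0 < a -> modR a (x + a * IZR n) = modR a x.
Proof.
  intros Ha. destruct (modR_spec a x Ha) as [H1 H2].
  apply modR_charac with (n := (Rfloor (x / a) + n)%Z); auto.
  rewrite plus_IZR. lra.
Qed.

Lemma modR_id a x : 0 < a -> 0 <= x < a -> modR a x = x.
Proof. intros Ha Hx. apply modR_charac with (n := 0%Z); auto. simpl. lra. Qed.

Lemma cong_eq a x y n : 0 < a -> 0 <= x < a -> 0 <= y < a -> x - y = a * IZR n -> x = y.
Proof.
  intros Ha Hx Hy E.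
  assert (n = 0%Z).
  { destruct (Z.lt_trichotomy n 0) as [Hn|[Hn|Hn]]; auto.
    - apply IZR_lt in Hn. assert (IZR n <= -1).
      { apply IZR_le. apply lt_IZR in Hn. lia. } nra.
    - apply IZR_lt in Hn. assert (1 <= IZR n).
      { apply IZR_le. apply lt_IZR in Hn. simpl in Hn. lia. } nra. }
  subst. simpl in E. lra.
Qed.

Lemma Rfloor_nonneg x : 0 <= x -> (0 <= Rfloor x)%Z.
Proof.
  intros H. destruct (Rfloor_spec x).
  assert ((-1 < Rfloor x)%Z) by (apply lt_IZR; simpl; lra). lia.
Qed.

Lemma pigeon : forall N (f : nat -> nat), (forall i, (i <= N)%nat -> (f i < N)%nat) ->
  exists i j, (i < j <= N)%nat /\ f i = f j.
Proof.
  induction N as [|N IH]; intros f Hf.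
  - specialize (Hf 0%nat (le_n 0)). lia.
  - set (v := f (S N)).
    destruct (classic (exists i, (i <= N)%nat /\ f i = v)) as [[i [Hi Ei]]|Hno].
    + exists i, (S N). split; [lia|]. exact Ei.
    + set (g := fun i => if Nat.eq_dec (f i) N then v else f i).
      destruct (IH g) as [i [j [Hij Eij]]].
      * intros i Hi. unfold g. assert (Hv : (v < S N)%nat) by (apply Hf; lia).
        assert (Hfi : (f i < S N)%nat) by (apply Hf; lia).
        destruct (Nat.eq_dec (f i) N).
        -- destruct (Nat.eq_dec v N); [|lia]. exfalso. apply Hno. exists i. split; [lia|]. lia.
        -- lia.
      * exists i, j. split; [lia|]. unfold g in Eij.
        destruct (Nat.eq_dec (f i) N), (Nat.eq_dec (f j) N); try lia.
        -- exfalso. apply Hno. exists j. split; [lia|]. auto.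
        -- exfalso. apply Hno. exists i. split; [lia|]. auto.
Qed.

Lemma real_pigeon (a eps : R) (r : nat -> R) (M : nat) : 0 < eps ->
  (forall n, 0 <= r n < a) -> exists n m, (M <= n)%nat /\ (n < m)%nat /\ Rabs (r m - r n) < eps.
Proof.
  intros He Hr.
  set (N := Z.to_nat (Rfloor (a / eps) + 1)).
  set (f := fun i => Z.to_nat (Rfloor (r (M + i)%nat / eps))).
  assert (Hb : forall i, (i <= N)%nat -> (f i < N)%nat).
  { intros i _. unfold f, N.
    destruct (Hr (M + i)%nat) as [H1 H2].
    assert (0 <= r (M+i)%nat / eps) by (apply Rmult_le_pos; [lra | left; apply Rinv_0_lt_compat; lra]).
    assert (r (M+i)%nat / eps < a / eps) by (unfold Rdiv; apply Rmult_lt_compat_r; [apply Rinv_0_lt_compat; lra| lra]).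
    destruct (Rfloor_spec (r (M+i)%nat / eps)). destruct (Rfloor_spec (a / eps)).
    assert ((0 <= Rfloor (r (M + i)%nat / eps))%Z) by (apply Rfloor_nonneg; lra).
    assert ((Rfloor (r (M + i)%nat / eps) < Rfloor (a / eps) + 1)%Z).
    { apply lt_IZR. rewrite plus_IZR. simpl. lra. }
    lia. }
  destruct (pigeon N f Hb) as [i [j [Hij E]]].
  exists (M + i)%nat, (M + j)%nat. split; [lia|]. split; [lia|].
  unfold f in E.
  destruct (Rfloor_spec (r (M+i)%nat / eps)). destruct (Rfloor_spec (r (M+j)%nat / eps)).
  destruct (Hr (M + i)%nat), (Hr (M+j)%nat).
  assert ((0 <= Rfloor (r (M + i)%nat / eps))%Z) by (apply Rfloor_nonneg;
     apply Rmult_le_pos; [lra | left; apply Rinv_0_lt_compat; lra]).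
  assert ((0 <= Rfloor (r (M + j)%nat / eps))%Z) by (apply Rfloor_nonneg;
     apply Rmult_le_pos; [lra | left; apply Rinv_0_lt_compat; lra]).
  assert (E2 : Rfloor (r (M + i)%nat / eps) = Rfloor (r (M + j)%nat / eps)) by lia.
  rewrite E2 in *.
  assert (Rabs (r (M+j)%nat / eps - r (M+i)%nat / eps) < 1) by (apply Rabs_def1; lra).
  replace (r (M+j)%nat - r (M+i)%nat) with (eps * (r (M+j)%nat / eps - r (M+i)%nat / eps)) by (field; lra).
  rewrite Rabs_mult, Rabs_pos_eq by lra. nra.
Qed.

Lemma sum_zero g n : (forall i, (i <= n)%nat -> g i = 0) -> sum_f_R0 g n = 0.
Proof.
  induction n; intros H; simpl.
  - apply H; lia.
  - rewrite IHn by (intros; apply H; lia). rewrite H by lia. lra.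
Qed.

Lemma sum_one g n i0 : (i0 <= n)%nat -> g i0 = 1 ->
  (forall i, (i <= n)%nat -> i <> i0 -> g i = 0) -> sum_f_R0 g n = 1.
Proof.
  induction n; intros Hi Hg H; simpl.
  - assert (i0 = 0%nat) by lia. subst. auto.
  - destruct (Nat.eq_dec i0 (S n)).
    + subst. rewrite sum_zero by (intros; apply H; lia). lra.
    + rewrite IHn by (auto; try lia; intros; apply H; lia). rewrite H by lia. lra.
Qed.

Lemma sum_ge_one g n i : (forall k, (k <= n)%nat -> 0 <= g k) -> (i <= n)%nat ->
  g i <= sum_f_R0 g n.
Proof.
  induction n; intros H Hi; simpl.
  - assert (i = 0%nat) by lia. subst. lra.
  - destruct (Nat.eq_dec i (S n)).
    + subst. assert (0 <= sum_f_R0 g n).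
      { clear IHn Hi. induction n; simpl. apply H; lia.
        assert (0 <= g (S n)) by (apply H; lia). assert (0 <= sum_f_R0 g n) by (apply IHn; intros; apply H; lia). lra. }
      lra.
    + assert (0 <= g (S n)) by (apply H; lia).
      assert (g i <= sum_f_R0 g n) by (apply IHn; [intros; apply H|]; lia). lra.
Qed.

Lemma sum_ge_two g n i j : (forall k, (k <= n)%nat -> 0 <= g k) -> (i <= n)%nat -> (j <= n)%nat -> i <> j ->
  g i + g j <= sum_f_R0 g n.
Proof.
  revert i j. induction n; intros i j H Hi Hj Hij; simpl.
  - lia.
  - destruct (Nat.eq_dec j (S n)).
    + subst. assert (g i <= sum_f_R0 g n) by (apply sum_ge_one; [intros; apply H|]; lia). lra.
    + destruct (Nat.eq_dec i (S n)).
      * subst. assert (g j <= sum_f_R0 g n) by (apply sum_ge_one; [intros; apply H|]; lia). lra.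
      * assert (0 <= g (S n)) by (apply H; lia).
        assert (g i + g j <= sum_f_R0 g n) by (apply IHn; [intros; apply H| | |]; lia). lra.
Qed.

Lemma sum_shiftC g C n : sum_f_R0 g n = sum_f_R0 (fun k => g k - C) n + INR (S n) * C.
Proof.
  induction n; simpl. lra. rewrite IHn. destruct n; simpl; lra.
Qed.

Lemma cesaro_eventually g C K : (forall k, (K <= k)%nat -> g k = C) -> Un_cv (cesaro g) C.
Proof.
  intros HK eps He.
  set (B := sum_f_R0 (fun k => g k - C) K).
  assert (HB : forall n, (K <= n)%nat -> sum_f_R0 (fun k => g k - C) n = B).
  { intros n Hn. induction Hn. reflexivity. simpl. rewrite IHHn. rewrite HK by lia. lra. }
  destruct (archimed (Rabs B / eps)) as [H1 _].
  exists (K + Z.to_nat (up (Rabs B / eps)))%nat.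
  intros n Hn. unfold R_dist, cesaro.
  rewrite sum_shiftC with (C := C), HB by lia.
  assert (HS : 0 < INR (S n)) by (apply lt_0_INR; lia).
  replace ((B + INR (S n) * C) / INR (S n) - C) with (B / INR (S n)) by (field; lra).
  assert (Hn2 : Rabs B / eps < INR (S n)).
  { assert (IZR (up (Rabs B / eps)) <= INR n).
    { destruct (Z_le_gt_dec (up (Rabs B / eps)) 0) as [Hl|Hl].
      - apply IZR_le in Hl. pose proof (pos_INR n). lra.
      - rewrite <- (Z2Nat.id (up (Rabs B / eps))) by lia. rewrite <- INR_IZR_INZ. apply le_INR. lia. }
    rewrite S_INR. lra. }
  unfold Rdiv. rewrite Rabs_mult, Rabs_inv, (Rabs_pos_eq (INR (S n))) by lra.
  apply (Rmult_lt_reg_r (INR (S n))); [lra|].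
  rewrite Rmult_assoc, Rinv_l by lra.
  assert (Rabs B < eps * INR (S n)).
  { apply (Rmult_lt_reg_r (/ eps)). apply Rinv_0_lt_compat; lra.
    replace (eps * INR (S n) * / eps) with (INR (S n)) by (field; lra). exact Hn2. }
  lra.
Qed.

Lemma chi0c_01 c x : chi0c c x = 0 \/ chi0c c x = 1.
Proof. unfold chi0c. destruct (Rle_dec 0 x); destruct (Rlt_dec x c); auto. Qed.

Lemma chi0c_1 c x : chi0c c x = 1 <-> 0 <= x < c.
Proof.
  unfold chi0c. destruct (Rle_dec 0 x); destruct (Rlt_dec x c); split; intros; try lra; auto.
Qed.

Definition gwin a b c t (x : Z -> R) m k := Mentry a b c t m k * x k.

Lemma symsum_idx (g : Z -> R) N k : (Z.abs k <= Z.of_nat N)%Z ->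
  g k = (fun i => g (Z.of_nat i - Z.of_nat N)%Z) (Z.to_nat (k + Z.of_nat N)) /\ (Z.to_nat (k + Z.of_nat N) <= 2 * N)%nat.
Proof.
  intros H. simpl. split.
  - f_equal. lia.
  - lia.
Qed.

Lemma win_exists a b c t x m : in_B0 x -> Mapply_eq a b c t x m 1 ->
  exists k, Mentry a b c t m k = 1 /\ x k = 1.
Proof.
  intros [Hx0 _] H. apply NNPP. intros Hno.
  assert (Hz : forall k, Mentry a b c t m k * x k = 0).
  { intros k. destruct (chi0c_01 c (t - a * IZR m + b * IZR k)) as [E|E];
    unfold Mentry; rewrite E; [lra|].
    destruct (Hx0 k) as [E2|E2]; rewrite E2; [lra|]. exfalso. apply Hno. exists k. unfold Mentry. auto. }
  assert (H0 : Un_cv (symsum (fun k => Mentry a b c t m k * x k)) 0).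
  { intros eps He. exists 0%nat. intros n _. unfold R_dist, symsum.
    rewrite sum_zero by (intros; apply Hz). rewrite Rminus_0_r, Rabs_R0. lra. }
  pose proof (UL_sequence _ _ _ H H0). lra.
Qed.

Lemma win_unique a b c t x m k1 k2 : in_B0 x -> Mapply_eq a b c t x m 1 ->
  Mentry a b c t m k1 = 1 -> x k1 = 1 -> Mentry a b c t m k2 = 1 -> x k2 = 1 -> k1 = k2.
Proof.
  intros [Hx0 _] H E1 F1 E2 F2. apply NNPP. intros Hne.
  destruct (H 1 ltac:(lra)) as [N0 HN0].
  set (N := (N0 + Z.to_nat (Z.abs k1) + Z.to_nat (Z.abs k2))%nat).
  specialize (HN0 N ltac:(unfold N; lia)).
  set (g := fun k => Mentry a b c t m k * x k).
  assert (Hge : 2 <= symsum g N).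
  { unfold symsum.
    assert (G1 := symsum_idx g N k1 ltac:(unfold N; lia)).
    assert (G2 := symsum_idx g N k2 ltac:(unfold N; lia)).
    destruct G1 as [G1 L1], G2 as [G2 L2].
    assert (g k1 = 1) by (unfold g; rewrite E1, F1; lra).
    assert (g k2 = 1) by (unfold g; rewrite E2, F2; lra).
    eapply Rle_trans; [|apply sum_ge_two with (i := Z.to_nat (k1 + Z.of_nat N)) (j := Z.to_nat (k2 + Z.of_nat N))].
    - simpl in G1, G2. cbv beta. rewrite <- G1, <- G2. lra.
    - intros k _. unfold g. destruct (chi0c_01 c (t - a * IZR m + b * IZR (Z.of_nat k - Z.of_nat N))) as [E|E];
      unfold Mentry; rewrite E; destruct (Hx0 (Z.of_nat k - Z.of_nat N)%Z) as [E'|E']; rewrite E'; lra.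
    - auto.
    - auto.
    - intros Heq. apply Hne. unfold N in Heq. lia. }
  unfold R_dist in HN0. fold g in HN0. apply Rabs_def2 in HN0. lra.
Qed.

Section SW.
Variable f : Z -> Z.
Hypothesis Hf : forall z, (f z < f (z + 1))%Z.

Lemma sw_up : forall n : nat, forall z, (f z + Z.of_nat n <= f (z + Z.of_nat n))%Z.
Proof.
  induction n; intros z. simpl Z.of_nat. rewrite !Z.add_0_r. lia.
  specialize (IHn z). specialize (Hf (z + Z.of_nat n)). rewrite Nat2Z.inj_succ.
  replace (z + Z.succ (Z.of_nat n))%Z with (z + Z.of_nat n + 1)%Z by lia. lia.
Qed.

Lemma sw_cross : forall n : nat, forall z0 m, (f z0 < m <= f (z0 + Z.of_nat n))%Z ->
  exists z, (f (z - 1) < m <= f z)%Z.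
Proof.
  induction n; intros z0 m H. simpl Z.of_nat in H. rewrite Z.add_0_r in H. lia.
  destruct (Z_le_gt_dec m (f (z0 + Z.of_nat n))) as [Hl|Hl].
  - apply (IHn z0). lia.
  - exists (z0 + Z.of_nat (S n))%Z. rewrite Nat2Z.inj_succ in *.
    replace (z0 + Z.succ (Z.of_nat n) - 1)%Z with (z0 + Z.of_nat n)%Z by lia. lia.
Qed.

Lemma sw_exists m : exists z, (f (z - 1) < m <= f z)%Z.
Proof.
  set (n0 := Z.to_nat (f 0 - m + 1)).
  set (z0 := (- Z.of_nat n0)%Z).
  assert (H0 : (f z0 < m)%Z).
  { pose proof (sw_up n0 z0). unfold z0 in *.
    replace (- Z.of_nat n0 + Z.of_nat n0)%Z with 0%Z in H by lia. unfold n0 in *. lia. }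
  set (n1 := Z.to_nat (m - f z0)).
  pose proof (sw_up n1 z0).
  apply (sw_cross n1 z0). unfold n1 in *. lia.
Qed.

Lemma sw_unique m z1 z2 : (f (z1 - 1) < m <= f z1)%Z -> (f (z2 - 1) < m <= f z2)%Z -> z1 = z2.
Proof.
  intros H1 H2.
  assert (Hm : forall z z', (z < z')%Z -> (f z <= f (z' - 1))%Z).
  { intros z z' Hz. pose proof (sw_up (Z.to_nat (z' - 1 - z)) z).
    replace (z + Z.of_nat (Z.to_nat (z' - 1 - z)))%Z with (z' - 1)%Z in H by lia. lia. }
  destruct (Z.lt_trichotomy z1 z2) as [L|[L|L]]; auto.
  - specialize (Hm _ _ L). lia.
  - specialize (Hm _ _ L). lia.
Qed.
End SW.

Section Main.
Variables a b c : R.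
Hypothesis ha : 0 < a.
Hypothesis hb : 0 < b.
Hypothesis hc : 0 < c.
Hypothesis hab : a < b.
Hypothesis hbc : b < c.
Hypothesis hc0l : b - a < c0 b c.
Hypothesis hc0u : c0 b c < a.
Hypothesis hc1l : 0 < IZR (Rfloor (c / b)) * b - IZR (Rfloor (IZR (Rfloor (c / b)) * b / a)) * a.
Hypothesis hc1u : IZR (Rfloor (c / b)) * b - IZR (Rfloor (IZR (Rfloor (c / b)) * b / a)) * a < 2 * a - b.
Hypothesis hq : (Rfloor (c / b) >= 2)%Z.

Definition qq := Rfloor (c / b).
Definition C0 := c0 b c.
Definition ee := C0 + a - b.
Definition S1 := IZR qq * b + b.
Definition S2 := IZR qq * b.
Definition sh u := if Rlt_dec u ee then S1 else S2.
Definition sig u := if Rlt_dec u ee then (qq + 1)%Z else qq.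
Definition Rres u := modR a (u + sh u).
Definition inF u := ee <= u < C0.
Definition inN u := 0 <= u < a /\ ~ inF u.

Lemma c_eq : c = IZR qq * b + C0.
Proof. unfold C0, c0, qq. ring. Qed.

Lemma sh_sig u : sh u = IZR (sig u) * b.
Proof. unfold sh, sig, S1, S2. destruct (Rlt_dec u ee); [rewrite plus_IZR; simpl|]; ring. Qed.

Lemma Rmap_step z : ~ inF (modR a z) -> Rmap a b c z = z + sh (modR a z).
Proof.
  intros H. unfold Rmap, sh, inF, ee, C0, S1, S2, qq in *.
  destruct (Rlt_dec (modR a z) (c0 b c + a - b)); [ring|].
  destruct (Rlt_dec (modR a z) (c0 b c)); [exfalso; apply H; lra| ring].
Qed.

Lemma Rmap_fix z : inF (modR a z) -> Rmap a b c z = z.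
Proof.
  intros H. unfold Rmap, inF, ee, C0 in *.
  destruct (Rlt_dec (modR a z) (c0 b c + a - b)); [lra|].
  destruct (Rlt_dec (modR a z) (c0 b c)); [auto| lra].
Qed.

Lemma modR_Rmap z : ~ inF (modR a z) -> modR a (Rmap a b c z) = Rres (modR a z).
Proof.
  intros H. rewrite Rmap_step by auto. unfold Rres.
  destruct (modR_spec a z ha) as [_ E].
  rewrite E at 1. replace (modR a z + a * IZR (Rfloor (z / a)) + sh (modR a z))
   with ((modR a z + sh (modR a z)) + a * IZR (Rfloor (z / a))) by ring.
  apply modR_shift; auto.
Qed.

Lemma arith_step u n : 0 <= u < a -> c - u <= IZR n * b < c - u + a ->
  ~ inF u /\ IZR n * b = sh u.
Proof.
  intros Hu Hn. rewrite c_eq in Hn.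
  assert (Hd : IZR (n - qq) * b >= C0 - u /\ IZR (n - qq) * b < C0 - u + a).
  { rewrite minus_IZR, Rmult_minus_distr_r. split; lra. }
  assert (Hd1 : (-1 < n - qq)%Z).
  { apply lt_IZR. destruct (Rle_or_lt (IZR (n - qq)) (-1)) as [Hl|Hl]; [|exact Hl].
    exfalso. assert (IZR (n - qq) * b <= - b) by nra. unfold C0 in *. lra. }
  assert (Hd2 : (n - qq < 2)%Z).
  { apply lt_IZR. destruct (Rle_or_lt 2 (IZR (n - qq))) as [Hl|Hl]; [|exact Hl].
    exfalso. assert (2 * b <= IZR (n - qq) * b) by nra. unfold C0 in *. lra. }
  assert (Hc : (n = qq \/ n = qq + 1)%Z) by lia.
  unfold inF, sh, S1, S2, ee. fold C0 in *.
  destruct Hc as [Hc|Hc]; subst n.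
  - rewrite Z.sub_diag in Hd. simpl in Hd.
    destruct (Rlt_dec u (C0 + a - b)); [exfalso; lra|]. split; [lra| auto].
  - replace (qq + 1 - qq)%Z with 1%Z in Hd by ring. simpl in Hd.
    destruct (Rlt_dec u (C0 + a - b)); [|exfalso; lra]. split; [lra|]. rewrite plus_IZR. simpl. ring.
Qed.

Lemma window_N y : inN y -> c <= y + sh y < a + c.
Proof.
  intros [Hy HF]. rewrite c_eq. unfold sh, S1, S2, inF, ee in *. fold C0 in *.
  destruct (Rlt_dec y (C0 + a - b)); split; try lra.
Qed.

Lemma S_forward t : in_S a b c t ->
  forall k, exists j, Nat.iter k (Rmap a b c) t = t + b * IZR j /\ exists x, in_B0 x /\ x j = 1 /\
     (forall m, Mapply_eq a b c t x m 1).
Proof.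
  intros [x [Hx HM]] k. induction k as [|k IH].
  - exists 0%Z. simpl. split; [ring|]. exists x. split; auto. split; auto. apply Hx.
  - destruct IH as [j [Ej [x' [Hx' [Hj HM']]]]].
    set (w := t + b * IZR j).
    set (K := Rfloor (w / a)).
    destruct (modR_spec a w ha) as [Hu Ew].
    fold K in Ew. set (u := modR a w) in *.
    assert (MK : Mentry a b c t K j = 1).
    { unfold Mentry. apply chi0c_1. unfold w in Ew. split; lra. }
    destruct (win_exists a b c t x' (K + 1)%Z Hx' (HM' _)) as [j' [Mj' Xj']].
    unfold Mentry in Mj'. apply chi0c_1 in Mj'. rewrite plus_IZR in Mj'. simpl in Mj'.
    assert (Hfar : ~ (t - a * IZR K + b * IZR j' < c)).
    { intros Hlt. assert (Mentry a b c t K j' = 1).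
      { unfold Mentry. apply chi0c_1. split; [|lra]. nra. }
      assert (j = j') by (apply (win_unique a b c t x' K); auto).
      subst j'. unfold w in Ew. nra. }
    assert (Hn : c - u <= IZR (j' - j) * b < c - u + a).
    { rewrite minus_IZR. unfold w in Ew. split; nra. }
    destruct (arith_step u (j' - j) Hu Hn) as [HF Hs].
    exists j'. split.
    + simpl. rewrite Ej. fold w. rewrite Rmap_step by auto. fold u. rewrite <- Hs.
      unfold w. rewrite minus_IZR. ring.
    + exists x'. auto.
Qed.

Lemma S_forward_N t : in_S a b c t -> forall k, ~ inF (modR a (Nat.iter k (Rmap a b c) t)).
Proof.
  intros H k.
  destruct (S_forward t H (S k)) as [jj [Ejj _]].
  destruct (S_forward t H k) as [j [Ej [x [Hx [Hj HM]]]]].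
  intros HF.
  set (w := t + b * IZR j). rewrite Ej in HF. fold w in HF.
  set (K := Rfloor (w / a)).
  destruct (modR_spec a w ha) as [Hu Ew]. fold K in Ew. set (u := modR a w) in *.
  assert (MK : Mentry a b c t K j = 1).
  { unfold Mentry. apply chi0c_1. unfold w in Ew. split; lra. }
  destruct (win_exists a b c t x (K + 1)%Z Hx (HM _)) as [j' [Mj' Xj']].
  unfold Mentry in Mj'. apply chi0c_1 in Mj'. rewrite plus_IZR in Mj'. simpl in Mj'.
  assert (Hfar : ~ (t - a * IZR K + b * IZR j' < c)).
  { intros Hlt. assert (Mentry a b c t K j' = 1).
    { unfold Mentry. apply chi0c_1. split; [|lra]. nra. }
    assert (j = j') by (apply (win_unique a b c t x K); auto).
    subst j'. unfold w in Ew. nra. }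
  assert (Hn : c - u <= IZR (j' - j) * b < c - u + a).
  { rewrite minus_IZR. unfold w in Ew. split; nra. }
  destruct (arith_step u (j' - j) Hu Hn) as [HF' _]. auto.
Qed.


Definition cutS S := a * IZR (Rfloor (S / a) + 1) - S.

Lemma floor_div X n : IZR n * a <= X < (IZR n + 1) * a -> Rfloor (X / a) = n.
Proof.
  intros [H1 H2]. apply Rfloor_unique.
  assert (E : X / a * a = X) by (field; lra).
  split.
  - apply (Rmult_le_reg_r a); lra.
  - apply (Rmult_lt_reg_r a); lra.
Qed.

Lemma floor_sep S x x' : 0 <= x -> x' < a -> x < x' ->
  Rfloor ((x + S) / a) <> Rfloor ((x' + S) / a) -> x < cutS S <= x'.
Proof.
  intros H0 H1 H2 Hne. unfold cutS. rewrite plus_IZR. simpl.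
  set (phi := Rfloor (S / a)).
  assert (Hs : IZR phi * a <= S < (IZR phi + 1) * a).
  { destruct (Rfloor_spec (S / a)) as [A B]. fold phi in A, B.
    assert (E : S / a * a = S) by (field; lra). split; nra. }
  destruct (Rlt_or_le x' (a * (IZR phi + 1) - S)) as [Hl|Hl].
  - exfalso. apply Hne. rewrite (floor_div (x + S) phi), (floor_div (x' + S) phi); auto; split; nra.
  - destruct (Rlt_or_le x (a * (IZR phi + 1) - S)) as [Hl2|Hl2]; [split; auto|].
    exfalso. apply Hne.
    rewrite (floor_div (x + S) (phi + 1)), (floor_div (x' + S) (phi + 1)); auto; rewrite plus_IZR; simpl; split; nra.
Qed.

Lemma Rres_formula u : Rres u = u + sh u - a * IZR (Rfloor ((u + sh u) / a)).
Proof. unfold Rres, modR. ring. Qed.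

Definition nocut x x' := ~ (x < ee <= x') /\ ~ (x < cutS S1 <= x') /\ ~ (x < cutS S2 <= x').

Lemma Rres_shift x x' : inN x -> inN x' -> x <= x' -> nocut x x' -> Rres x' = Rres x + (x' - x).
Proof.
  intros [Hx Fx] [Hx' Fx'] Hle [N1 [N2 N3]].
  destruct (Req_dec x x') as [E|Hne]; [subst; ring|].
  assert (Hlt : x < x') by lra.
  assert (Hsh : sh x = sh x').
  { unfold sh. destruct (Rlt_dec x ee), (Rlt_dec x' ee); auto.
    - exfalso. apply N1. lra.
    - exfalso. lra. }
  assert (Hfl : Rfloor ((x + sh x) / a) = Rfloor ((x' + sh x') / a)).
  { rewrite <- Hsh. destruct (Z.eq_dec (Rfloor ((x + sh x) / a)) (Rfloor ((x' + sh x) / a))) as [E|E]; auto.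
    exfalso. apply floor_sep in E; try lra.
    unfold sh in E. destruct (Rlt_dec x ee); [apply N2|apply N3]; exact E. }
  rewrite !Rres_formula. rewrite <- Hfl, <- Hsh. ring.
Qed.

Lemma modR_right y d : 0 <= d -> modR a y + d < a -> modR a (y + d) = modR a y + d.
Proof.
  intros Hd Hl. destruct (modR_spec a y ha) as [H1 H2].
  apply modR_charac with (n := Rfloor (y / a)); auto. lra. lra.
Qed.

Section Dyn.
Variable r : nat -> R.
Hypothesis Hr : forall n, inN (r n).
Hypothesis Hstep : forall n, r (S n) = Rres (r n).

Definition RA p := forall eps, 0 < eps -> forall M, exists n, (M <= n)%nat /\ p <= r n < p + eps.

Lemma notRA p : ~ RA p -> exists eps M, 0 < eps /\ forall n, (M <= n)%nat -> ~ (p <= r n < p + eps).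
Proof.
  intros H. unfold RA in H. apply not_all_ex_not in H. destruct H as [eps H].
  apply imply_to_and in H. destruct H as [He H].
  apply not_all_ex_not in H. destruct H as [M H].
  exists eps, M. split; auto. intros n Hn Hc. apply H. exists n. auto.
Qed.

Lemma shift_iter n m : r m = r n -> forall j, r (m + j)%nat = r (n + j)%nat.
Proof.
  intros E j. induction j. rewrite !Nat.add_0_r. auto.
  rewrite !Nat.add_succ_r, !Hstep, IHj. auto.
Qed.

Lemma RA_exists : exists p, RA p.
Proof.
  apply NNPP. intros Hno.
  assert (Hall : forall p, ~ RA p) by (intros p Hp; apply Hno; exists p; auto).
  destruct (notRA _ (Hall ee)) as [e1 [M1 [He1 H1]]].
  destruct (notRA _ (Hall (cutS S1))) as [e2 [M2 [He2 H2]]].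
  destruct (notRA _ (Hall (cutS S2))) as [e3 [M3 [He3 H3]]].
  set (eps := Rmin e1 (Rmin e2 e3)).
  assert (Heps : 0 < eps) by (unfold eps; repeat apply Rmin_glb_lt; auto).
  assert (Ee1 : eps <= e1) by (unfold eps; apply Rmin_l).
  assert (Ee2 : eps <= e2) by (unfold eps; eapply Rle_trans; [apply Rmin_r| apply Rmin_l]).
  assert (Ee3 : eps <= e3) by (unfold eps; eapply Rle_trans; [apply Rmin_r| apply Rmin_r]).
  set (M := (M1 + M2 + M3)%nat).
  destruct (real_pigeon a eps r M Heps (fun n => proj1 (Hr n))) as [n [m [Hn [Hnm Hd]]]].
  assert (Hnc : forall x x' k, (M <= k)%nat -> x' = r k -> x <= x' -> x' - x < eps -> nocut x x').
  { intros x x' k Hk Ex Hle Hlt. subst x'. split; [|split]; intros [A B].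
    - apply (H1 k); [unfold M in Hk; lia| lra].
    - apply (H2 k); [unfold M in Hk; lia| lra].
    - apply (H3 k); [unfold M in Hk; lia| lra]. }
  destruct (Req_dec (r m) (r n)) as [E|Ne].
  - apply (Hall (r n)). intros e He M'. exists (n + M' * (m - n))%nat. split; [nia|].
    assert (forall i, r (n + i * (m - n))%nat = r n).
    { induction i. rewrite Nat.mul_0_l, Nat.add_0_r. auto.
      replace (n + S i * (m - n))%nat with (m + i * (m - n))%nat by nia.
      rewrite (shift_iter n m E). auto. }
    rewrite H. lra.
  - set (D := r m - r n).
    assert (HD : forall j, r (m + j)%nat = r (n + j)%nat + D).
    { induction j. rewrite !Nat.add_0_r. unfold D. ring.
      rewrite !Nat.add_succ_r, !Hstep.
      destruct (Rle_or_lt 0 D) as [Dp|Dn].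
      - rewrite IHj. rewrite (Rres_shift (r (n + j)%nat) (r (n+j)%nat + D)); auto.
        + ring.
        + rewrite <- IHj. auto.
        + lra.
        + apply (Hnc _ _ (m + j)%nat); auto; try lia; try lra. apply Rabs_def2 in Hd. fold D in Hd. lra.
      - rewrite IHj. rewrite (Rres_shift (r (n + j)%nat + D) (r (n+j)%nat) ); auto.
        + ring.
        + rewrite <- IHj. auto.
        + lra.
        + apply (Hnc _ _ (n + j)%nat); auto; try lia; try lra. apply Rabs_def2 in Hd. fold D in Hd. lra. }
    assert (HI : forall i, r (n + i * (m - n))%nat = r n + INR i * D).
    { induction i. rewrite Nat.mul_0_l, Nat.add_0_r. simpl. ring.
      replace (n + S i * (m - n))%nat with (m + i * (m - n))%nat by nia.
      rewrite HD, IHi, S_INR. ring. }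
    assert (HDa : 0 < Rabs D) by (apply Rabs_pos_lt; unfold D; lra).
    destruct (archimed (a / Rabs D)) as [A1 _].
    set (i := Z.to_nat (up (a / Rabs D))).
    assert (Hi : a / Rabs D < INR i).
    { unfold i. destruct (Z_le_gt_dec (up (a / Rabs D)) 0) as [Hl|Hl].
      - apply IZR_le in Hl. assert (0 < a / Rabs D) by (apply Rdiv_lt_0_compat; lra). lra.
      - rewrite INR_IZR_INZ, Z2Nat.id by lia. auto. }
    assert (a < INR i * Rabs D).
    { apply (Rmult_lt_reg_r (/ Rabs D)). apply Rinv_0_lt_compat; lra.
      replace (INR i * Rabs D * / Rabs D) with (INR i) by (field; lra). exact Hi. }
    specialize (HI i). destruct (Hr (n + i * (m - n))%nat) as [[A B] _]. destruct (Hr n) as [[A' B'] _].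
    rewrite HI in A, B.
    assert (Hpos : 0 <= INR i) by apply pos_INR.
    destruct (Rle_or_lt 0 D).
    + rewrite Rabs_pos_eq in * by lra. nra.
    + rewrite Rabs_left in * by lra. nra.
Qed.

Lemma RA_range p : RA p -> inN p.
Proof.
  intros H. split; [split|].
  - destruct (Rle_or_lt 0 p) as [|Hp]; auto. exfalso.
    destruct (H (- p) ltac:(lra) 0%nat) as [n [_ [A B]]]. destruct (Hr n) as [[C D] _]. lra.
  - destruct (H 1 ltac:(lra) 0%nat) as [n [_ [A B]]]. destruct (Hr n) as [[C D] _]. lra.
  - intros [F1 F2]. destruct (H (C0 - p) ltac:(lra) 0%nat) as [n [_ [A B]]].
    destruct (Hr n) as [_ F]. apply F. split; lra.
Qed.

Definition gap p w := if Rlt_dec p w then w - p else 1.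

Lemma gap_pos p w : 0 < gap p w.
Proof. unfold gap. destruct (Rlt_dec p w); lra. Qed.

Lemma gap_ok p w x : p < w <= x -> x < p + gap p w -> False.
Proof. unfold gap. destruct (Rlt_dec p w); intros; lra. Qed.

Lemma RA_fwd p : RA p -> RA (Rres p).
Proof.
  intros H eps He M.
  set (d := Rmin eps (Rmin (gap p ee) (Rmin (gap p (cutS S1)) (gap p (cutS S2))))).
  assert (Hd : 0 < d) by (unfold d; repeat apply Rmin_glb_lt; auto; apply gap_pos).
  assert (D0 : d <= eps) by (unfold d; apply Rmin_l).
  assert (D1 : d <= gap p ee) by (unfold d; eapply Rle_trans; [apply Rmin_r| apply Rmin_l]).
  assert (D2 : d <= gap p (cutS S1)) by (unfold d; eapply Rle_trans; [apply Rmin_r| eapply Rle_trans; [apply Rmin_r|apply Rmin_l]]).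
  assert (D3 : d <= gap p (cutS S2)) by (unfold d; eapply Rle_trans; [apply Rmin_r| eapply Rle_trans; [apply Rmin_r|apply Rmin_r]]).
  destruct (H d Hd M) as [n [Hn [A B]]].
  exists (S n). split; [lia|]. rewrite Hstep.
  rewrite (Rres_shift p (r n)); auto.
  - lra.
  - apply RA_range; auto.
  - split; [|split]; intros Hc; eapply gap_ok; eauto; lra.
Qed.

Lemma RA_bwd p : RA p -> exists p', RA p' /\ Rres p' = p.
Proof.
  intros H. destruct (RA_range p H) as [[Hp0 Hpa] _].
  set (Q := fun beta : bool => forall eps, 0 < eps -> forall M, exists n, (M <= n)%nat /\
     p <= r (S n) < p + eps /\ (beta = true <-> r n < ee)).
  assert (HQ : exists beta, Q beta).
  { apply NNPP. intros Hno.
    assert (Hn1 : ~ Q true) by (intros Hq; apply Hno; eauto).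
    assert (Hn2 : ~ Q false) by (intros Hq; apply Hno; eauto).
    unfold Q in Hn1, Hn2.
    apply not_all_ex_not in Hn1. destruct Hn1 as [e1 Hn1]. apply imply_to_and in Hn1. destruct Hn1 as [He1 Hn1].
    apply not_all_ex_not in Hn1. destruct Hn1 as [M1 Hn1].
    apply not_all_ex_not in Hn2. destruct Hn2 as [e2 Hn2]. apply imply_to_and in Hn2. destruct Hn2 as [He2 Hn2].
    apply not_all_ex_not in Hn2. destruct Hn2 as [M2 Hn2].
    destruct (H (Rmin e1 e2) ltac:(apply Rmin_glb_lt; auto) (S (M1 + M2))) as [n' [Hn' [A B]]].
    destruct n' as [|n]; [lia|].
    assert (Rmin e1 e2 <= e1) by apply Rmin_l. assert (Rmin e1 e2 <= e2) by apply Rmin_r.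
    destruct (Rlt_dec (r n) ee) as [Hlt|Hge].
    - apply Hn1. exists n. split; [lia|]. split; [lra|]. split; auto.
    - apply Hn2. exists n. split; [lia|]. split; [lra|]. split; intros; [discriminate| contradiction]. }
  destruct HQ as [beta Hbeta].
  set (Sb := if beta then S1 else S2).
  set (p' := modR a (p - Sb)).
  destruct (modR_spec a (p - Sb) ha) as [[Hp'0 Hp'a] Ep'].
  fold p' in Hp'0, Hp'a, Ep'.
  assert (W : forall n, beta = true <-> r n < ee -> p <= r (S n) -> r (S n) - p < a - p' ->
              r n = p' + (r (S n) - p)).
  { intros n Hb A B.
    assert (Hsh : sh (r n) = Sb).
    { unfold sh, Sb. destruct beta; destruct (Rlt_dec (r n) ee); auto.
      - exfalso. apply n0. apply Hb. auto.
      - assert (false = true) by (apply Hb; auto). discriminate. }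
    assert (E2 : modR a (p - Sb + (r (S n) - p)) = p' + (r (S n) - p)) by (apply modR_right; fold p'; lra).
    rewrite <- E2. rewrite Hstep. unfold Rres. rewrite Hsh.
    destruct (modR_spec a (r n + Sb) ha) as [_ E1].
    destruct (Hr n) as [[R0 R1] _].
    symmetry. apply modR_charac with (n := (- Rfloor ((r n + Sb) / a))%Z); auto.
    rewrite opp_IZR. lra. }
  exists p'. split.
  - intros eps He M.
    destruct (Hbeta (Rmin eps (a - p')) ltac:(apply Rmin_glb_lt; lra) M) as [n [Hn [[A B] Hb]]].
    exists n. split; auto.
    assert (Rmin eps (a - p') <= eps) by apply Rmin_l. assert (Rmin eps (a - p') <= a - p') by apply Rmin_r.
    rewrite (W n) by (auto; lra). split; lra.
  - set (g := if Rlt_dec p' ee then ee - p' else 1).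
    assert (Hg : 0 < g) by (unfold g; destruct (Rlt_dec p' ee); lra).
    destruct (Hbeta (Rmin g (a - p')) ltac:(apply Rmin_glb_lt; lra) 0%nat) as [n [_ [[A B] Hb]]].
    assert (Rmin g (a - p') <= g) by apply Rmin_l. assert (Rmin g (a - p') <= a - p') by apply Rmin_r.
    assert (Wn := W n Hb A ltac:(lra)).
    assert (Hsh : sh p' = Sb).
    { unfold sh, Sb, g in *. destruct beta; destruct (Rlt_dec p' ee); auto.
      - exfalso. assert (r n < ee) by (apply Hb; auto). lra.
      - exfalso. assert (false = true) by (apply Hb; lra). discriminate. }
    unfold Rres. rewrite Hsh.
    replace (p' + Sb) with (p + a * IZR (- Rfloor ((p - Sb) / a))) by (rewrite opp_IZR; lra).
    rewrite modR_shift by auto. apply modR_id; auto.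
Qed.

End Dyn.


Section Build.
Variable A : R -> Prop.
Hypothesis HAN : forall u, A u -> inN u.
Hypothesis HAf : forall u, A u -> A (Rres u).
Hypothesis HAb : forall u, A u -> exists v, A v /\ Rres v = u.
Variable p : R.
Hypothesis HAp : A p.

Definition predf u := epsilon (inhabits 0) (fun v => A v /\ Rres v = u).
Definition fwd n := Nat.iter n Rres p.
Definition back n := Nat.iter n predf p.

Lemma fwd_A n : A (fwd n).
Proof. induction n; simpl; auto. Qed.

Lemma back_A n : A (back n) /\ Rres (back (S n)) = back n.
Proof.
  induction n.
  - simpl. split; auto. apply (epsilon_spec (inhabits 0) (fun v => A v /\ Rres v = p)). auto.
  - destruct IHn as [IH1 IH2].
    assert (H := epsilon_spec (inhabits 0) (fun v => A v /\ Rres v = back n) (HAb _ IH1)).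
    fold (predf (back n)) in H. change (back (S n)) with (predf (back n)). destruct H as [H1 H2].
    split; auto.
    assert (H' := epsilon_spec (inhabits 0) (fun v => A v /\ Rres v = predf (back n)) (HAb _ H1)).
    apply H'.
Qed.

Definition yy z := if Z_le_dec 0 z then fwd (Z.to_nat z) else back (Z.to_nat (- z)).

Lemma yy_A z : A (yy z).
Proof. unfold yy. destruct (Z_le_dec 0 z). apply fwd_A. apply back_A. Qed.

Lemma yy_step z : Rres (yy z) = yy (z + 1).
Proof.
  unfold yy. destruct (Z_le_dec 0 z), (Z_le_dec 0 (z + 1)); try lia.
  - replace (Z.to_nat (z + 1)) with (S (Z.to_nat z)) by lia. reflexivity.
  - assert (z = -1)%Z by lia. subst. simpl. change p with (back 0). apply back_A.
  - replace (Z.to_nat (- z)) with (S (Z.to_nat (- (z + 1)))) by lia. apply back_A.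
Qed.

Fixpoint kf n := match n with O => 0%Z | S n => (kf n + sig (fwd n))%Z end.
Fixpoint kb n := match n with O => 0%Z | S n => (kb n - sig (back (S n)))%Z end.
Definition kk z := if Z_le_dec 0 z then kf (Z.to_nat z) else kb (Z.to_nat (- z)).

Lemma kk_step z : kk (z + 1) = (kk z + sig (yy z))%Z.
Proof.
  unfold kk, yy. destruct (Z_le_dec 0 z), (Z_le_dec 0 (z + 1)); try lia.
  - replace (Z.to_nat (z + 1)) with (S (Z.to_nat z)) by lia. reflexivity.
  - assert (z = -1)%Z by lia. subst. simpl. lia.
  - replace (Z.to_nat (- z)) with (S (Z.to_nat (- (z + 1)))) by lia. simpl. lia.
Qed.

Definition Zp z := p + b * IZR (kk z).

Lemma Zp_step z : Zp (z + 1) = Zp z + sh (yy z).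
Proof. unfold Zp. rewrite kk_step, plus_IZR, sh_sig. ring. Qed.

Lemma Zp_cong z : exists N, Zp z = yy z + a * IZR N.
Proof.
  assert (Key : forall z, exists F, yy (z + 1) = yy z + sh (yy z) - a * IZR F).
  { intros w. rewrite <- yy_step. unfold Rres. exists (Rfloor ((yy w + sh (yy w)) / a)).
    unfold modR. ring. }
  induction z using Z.peano_ind.
  - exists 0%Z. unfold Zp, kk, yy. simpl. change (Nat.iter 0 Rres p) with p. ring.
  - destruct IHz as [N HN]. destruct (Key z) as [F HF]. exists (N + F)%Z.
    rewrite <- Z.add_1_r, Zp_step, HF, plus_IZR. rewrite HN. ring.
  - destruct IHz as [N HN]. destruct (Key (Z.pred z)) as [F HF].
    replace (Z.pred z + 1)%Z with z in HF by lia.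
    exists (N - F)%Z. pose proof (Zp_step (Z.pred z)) as E.
    replace (Z.pred z + 1)%Z with z in E by lia. rewrite minus_IZR. nra.
Qed.

Definition KK z := Rfloor (Zp z / a).

Lemma KK_eq z : Zp z = yy z + a * IZR (KK z).
Proof.
  destruct (Zp_cong z) as [N HN]. destruct (HAN _ (yy_A z)) as [Hy _].
  assert (modR a (Zp z) = yy z) by (apply modR_charac with N; auto).
  destruct (modR_spec a (Zp z) ha) as [_ E]. unfold KK. lra.
Qed.

Lemma tiling z : a * IZR (KK z) + c <= Zp (z + 1) < a * IZR (KK z) + a + c.
Proof.
  rewrite Zp_step, KK_eq. pose proof (window_N _ (HAN _ (yy_A z))). lra.
Qed.

Lemma KK_strict z : (KK z < KK (z + 1))%Z.
Proof.
  pose proof (tiling z). pose proof (KK_eq (z + 1)).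
  destruct (HAN _ (yy_A (z + 1))) as [[Y0 Y1] _].
  apply lt_IZR. apply (Rmult_lt_reg_l a); auto. lra.
Qed.

Lemma window_iff z m : Mentry a b c p m (kk z) = 1 <-> (KK (z - 1) < m <= KK z)%Z.
Proof.
  unfold Mentry. rewrite chi0c_1.
  replace (p - a * IZR m + b * IZR (kk z)) with (Zp z - a * IZR m) by (unfold Zp; ring).
  pose proof (KK_eq z). destruct (HAN _ (yy_A z)) as [[Y0 Y1] _].
  pose proof (tiling (z - 1)). replace (z - 1 + 1)%Z with z in H0 by ring.
  split.
  - intros [H1 H2]. split.
    + apply lt_IZR. apply (Rmult_lt_reg_l a); auto. lra.
    + apply le_IZR. destruct (Rle_or_lt (IZR m) (IZR (KK z))) as [|Hl]; auto.
      exfalso. assert (IZR (KK z) + 1 <= IZR m).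
      { apply lt_IZR in Hl. rewrite <- plus_IZR. apply IZR_le. lia. }
      nra.
  - intros [H1 H2]. apply IZR_le in H2. assert (IZR (KK (z - 1)) + 1 <= IZR m).
    { rewrite <- plus_IZR. apply IZR_le. lia. }
    split; nra.
Qed.

Definition xx k := if excluded_middle_informative (exists z, kk z = k) then 1 else 0.

Lemma build_S : in_S a b c p.
Proof.
  exists xx. split.
  - split.
    + intros k. unfold xx. destruct (excluded_middle_informative _); auto.
    + unfold xx. destruct (excluded_middle_informative _) as [|n]; auto.
      exfalso. apply n. exists 0%Z. reflexivity.
  - intros m. destruct (sw_exists KK KK_strict m) as [zs Hzs].
    set (ks := kk zs).
    set (g := fun k => Mentry a b c p m k * xx k).
    assert (Hg1 : g ks = 1).
    { unfold g, ks. rewrite (proj2 (window_iff zs m) Hzs). unfold xx.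
      destruct (excluded_middle_informative _) as [|n]; [ring|]. exfalso. apply n. exists zs. auto. }
    assert (Hg0 : forall k, k <> ks -> g k = 0).
    { intros k Hk. unfold g, xx. destruct (excluded_middle_informative _) as [[z Hz]|]; [|ring].
      destruct (chi0c_01 c (p - a * IZR m + b * IZR k)) as [E|E].
      - unfold Mentry. rewrite E. ring.
      - exfalso. assert (Mentry a b c p m (kk z) = 1) by (rewrite Hz; exact E).
        apply window_iff in H. assert (z = zs) by (apply (sw_unique KK KK_strict m); auto).
        subst. apply Hk. auto. }
    intros eps He. exists (Z.to_nat (Z.abs ks)). intros n Hn.
    unfold R_dist. fold g. unfold symsum.
    rewrite (sum_one _ _ (Z.to_nat (ks + Z.of_nat n))).
    + rewrite Rminus_diag_eq, Rabs_R0 by auto. auto.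
    + lia.
    + cbv beta. replace (Z.of_nat (Z.to_nat (ks + Z.of_nat n)) - Z.of_nat n)%Z with ks by lia. auto.
    + intros i Hi Hne. cbv beta. apply Hg0. intros E. apply Hne. lia.
Qed.

End Build.


Lemma cos_lt_1 y : 0 < y < 2 * PI -> cos y < 1.
Proof.
  intros [H1 H2]. replace y with (2 * (y / 2)) by field.
  rewrite cos_2a_sin. assert (0 < sin (y / 2)) by (apply sin_gt_0; lra). nra.
Qed.

Lemma cos_int y n : (0 <= n)%Z -> cos (y + 2 * IZR n * PI) = cos y.
Proof.
  intros Hn. rewrite <- (Z2Nat.id n) by auto. rewrite <- INR_IZR_INZ. apply cos_period.
Qed.

Lemma cos_S_lt S phi rho : S = a * IZR phi + rho -> (0 <= phi)%Z -> 0 < rho < a -> cos (2 * PI / a * S) < 1.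
Proof.
  intros E Hp Hr. replace (2 * PI / a * S) with (2 * PI / a * rho + 2 * IZR phi * PI) by (rewrite E; field; lra).
  rewrite cos_int by auto. apply cos_lt_1. pose proof PI_RGT_0.
  split.
  - apply Rmult_lt_0_compat; [|lra]. apply Rdiv_lt_0_compat; lra.
  - replace (2 * PI / a * rho) with (2 * PI * (rho / a)) by (field; lra).
    assert (rho / a < 1).
    { apply (Rmult_lt_reg_r a); auto. replace (rho / a * a) with rho by (field; lra). lra. }
    assert (0 < rho / a) by (apply Rdiv_lt_0_compat; lra). nra.
Qed.

Definition phi2 := Rfloor (IZR qq * b / a).

Lemma phi2_nonneg : (0 <= phi2)%Z.
Proof.
  apply Rfloor_nonneg. apply Rmult_le_pos; [|left; apply Rinv_0_lt_compat; auto].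
  apply Rmult_le_pos; [|lra]. apply IZR_le. unfold qq. lia.
Qed.

Lemma cS2 : cos (2 * PI / a * S2) < 1.
Proof.
  apply (cos_S_lt S2 phi2 (IZR qq * b - IZR phi2 * a)).
  - unfold S2. ring.
  - apply phi2_nonneg.
  - unfold phi2, qq. lra.
Qed.

Lemma cS1 : cos (2 * PI / a * S1) < 1.
Proof.
  apply (cos_S_lt S1 (phi2 + 1) (IZR qq * b - IZR phi2 * a + b - a)).
  - unfold S1. rewrite plus_IZR. simpl. ring.
  - pose proof phi2_nonneg. lia.
  - unfold phi2, qq. lra.
Qed.

Definition Cm := Rmax (cos (2 * PI / a * S1)) (cos (2 * PI / a * S2)).
Definition kap := sqrt ((1 + Cm) / 2).

Lemma Cm_props : -1 <= Cm < 1.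
Proof.
  unfold Cm. destruct (COS_bound (2 * PI / a * S1)). pose proof cS1. pose proof cS2.
  unfold Rmax. destruct (Rle_dec _ _); lra.
Qed.

Lemma kap_props : 0 <= kap < 1 /\ 2 * kap * kap - 1 = Cm.
Proof.
  pose proof Cm_props. unfold kap.
  assert (E : sqrt ((1 + Cm) / 2) * sqrt ((1 + Cm) / 2) = (1 + Cm) / 2) by (apply sqrt_sqrt; lra).
  pose proof (sqrt_pos ((1 + Cm) / 2)).
  split; [split|]; auto.
  - destruct (Rlt_or_le (sqrt ((1 + Cm) / 2)) 1) as [|Hl]; auto. nra.
  - lra.
Qed.

Lemma trig_pair A B k : 0 <= k -> k < cos A -> k < cos B -> 2 * k * k - 1 < cos (B - A).
Proof.
  intros Hk HA HB. rewrite cos_minus.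
  pose proof (sin2_cos2 A) as EA. pose proof (sin2_cos2 B) as EB. unfold Rsqr in EA, EB.
  destruct (COS_bound A), (COS_bound B).
  set (cA := cos A) in *. set (cB := cos B) in *. set (sA := sin A) in *. set (sB := sin B) in *.
  assert (P1 : sA * sA <= 1 - k * k) by nra.
  assert (P2 : sB * sB <= 1 - k * k) by nra.
  assert (P3 : (sB * sA) * (sB * sA) <= (1 - k * k) * (1 - k * k)).
  { replace ((sB * sA) * (sB * sA)) with ((sB * sB) * (sA * sA)) by ring.
    apply Rmult_le_compat; nra. }
  assert (P4 : - (1 - k * k) <= sB * sA) by nra.
  assert (P5 : k * k < cB * cA) by nra.
  lra.
Qed.

Definition hh (t0 : R) (x : R) := / 2 * ((cos (2 * PI / a * (x - t0)) - kap) + Rabs (cos (2 * PI / a * (x - t0)) - kap)).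

Lemma hh_cont t0 : continuity (hh t0).
Proof.
  assert (HL : continuity (mult_real_fct (2 * PI / a) (minus_fct id (fct_cte t0)))).
  { apply continuity_scal. apply continuity_minus. apply derivable_continuous, derivable_id.
    apply continuity_const. intros x y. reflexivity. }
  assert (Hg : continuity (minus_fct (comp cos (mult_real_fct (2 * PI / a) (minus_fct id (fct_cte t0)))) (fct_cte kap))).
  { apply continuity_minus. apply continuity_comp; auto. apply continuity_cos.
    apply continuity_const. intros x y. reflexivity. }
  set (g := minus_fct (comp cos (mult_real_fct (2 * PI / a) (minus_fct id (fct_cte t0)))) (fct_cte kap)) in *.
  change (continuity (mult_real_fct (/ 2) (plus_fct g (comp Rabs g)))).
  apply continuity_scal. apply continuity_plus; auto. apply continuity_comp; auto. apply Rcontinuity_abs.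
Qed.

Lemma hh_per t0 x : hh t0 (x + a) = hh t0 x.
Proof.
  unfold hh. replace (2 * PI / a * (x + a - t0)) with (2 * PI / a * (x - t0) + 2 * IZR 1 * PI) by (simpl; field; lra).
  rewrite cos_int by lia. auto.
Qed.

Lemma hh_bounds t0 x : 0 <= hh t0 x <= 1 - kap /\ (0 < hh t0 x -> kap < cos (2 * PI / a * (x - t0))).
Proof.
  unfold hh. destruct (COS_bound (2 * PI / a * (x - t0))). pose proof kap_props.
  set (v := cos (2 * PI / a * (x - t0)) - kap).
  unfold v. destruct (Rle_or_lt 0 (cos (2 * PI / a * (x - t0)) - kap)).
  - rewrite Rabs_pos_eq by auto. split; [split|]; intros; lra.
  - rewrite Rabs_left by auto. split; [split|]; intros; lra.
Qed.

Lemma hh_t0 t0 : hh t0 t0 = 1 - kap.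
Proof.
  unfold hh. replace (2 * PI / a * (t0 - t0)) with 0 by ring. rewrite cos_0.
  pose proof kap_props. rewrite Rabs_pos_eq by lra. lra.
Qed.

Lemma pair_bound t0 x s : (s = S1 \/ s = S2) -> hh t0 x + hh t0 (x + s) <= 1 - kap.
Proof.
  intros Hs. destruct (hh_bounds t0 x) as [[A1 A2] A3]. destruct (hh_bounds t0 (x + s)) as [[B1 B2] B3].
  destruct (Rlt_or_le 0 (hh t0 x)) as [Px|Px]; [|lra].
  destruct (Rlt_or_le 0 (hh t0 (x + s))) as [Py|Py]; [|lra].
  exfalso. specialize (A3 Px). specialize (B3 Py).
  destruct kap_props as [[K0 K1] KE].
  pose proof (trig_pair _ _ _ K0 A3 B3) as T.
  replace (2 * PI / a * (x + s - t0) - 2 * PI / a * (x - t0)) with (2 * PI / a * s) in T by ring.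
  rewrite KE in T. unfold Cm in T.
  destruct Hs; subst s; [pose proof (Rmax_l (cos (2 * PI / a * S1)) (cos (2 * PI / a * S2)))
                         | pose proof (Rmax_r (cos (2 * PI / a * S1)) (cos (2 * PI / a * S2)))]; lra.
Qed.

Lemma per_int (f : R -> Cplx) : periodic_C a f -> forall n x, f (x + a * IZR n) = f x.
Proof.
  intros Hp.
  assert (Hn : forall n : nat, forall x, f (x + a * INR n) = f x).
  { induction n; intros x. simpl. rewrite Rmult_0_r, Rplus_0_r. auto.
    rewrite S_INR. replace (x + a * (INR n + 1)) with ((x + a * INR n) + a) by ring. rewrite Hp. auto. }
  intros n x. destruct (Z_le_dec 0 n) as [H|H].
  - rewrite <- (Z2Nat.id n) by auto. rewrite <- INR_IZR_INZ. auto.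
  - rewrite <- (Hn (Z.to_nat (- n)) (x + a * IZR n)). rewrite INR_IZR_INZ, Z2Nat.id by lia.
    rewrite opp_IZR. f_equal. ring.
Qed.

Theorem main_iff : (forall t : R, ~ in_S a b c t) <->
   (forall t : R, exists t0 : R,
       c0 b c + a - b <= t0 < c0 b c /\
       forall f : R -> Cplx, cont_C f -> periodic_C a f ->
         cesaro_lim_C f (fun k => Nat.iter k (Rmap a b c) t) (f t0)).
Proof.
  split.
  - intros HS t.
    destruct (classic (exists K, inF (modR a (Nat.iter K (Rmap a b c) t)))) as [[K HK]|HnK].
    + set (z := Nat.iter K (Rmap a b c) t) in *.
      exists (modR a z). split; [unfold inF, ee, C0 in HK; lra|].
      intros f _ Hper.
      assert (Hfix : forall k, (K <= k)%nat -> Nat.iter k (Rmap a b c) t = z).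
      { intros k Hk. induction Hk; auto. simpl. rewrite IHHk. apply Rmap_fix. auto. }
      assert (Hfz : f z = f (modR a z)).
      { destruct (modR_spec a z ha) as [_ E]. rewrite E at 1. apply per_int. auto. }
      split; apply (cesaro_eventually _ _ K); intros k Hk; rewrite Hfix by auto; rewrite Hfz; auto.
    + exfalso.
      set (r := fun k => modR a (Nat.iter k (Rmap a b c) t)).
      assert (Hr : forall n, inN (r n)).
      { intros n. split. apply modR_spec; auto. intros HF. apply HnK. exists n. auto. }
      assert (Hst : forall n, r (S n) = Rres (r n)).
      { intros n. unfold r. simpl. apply modR_Rmap. intros HF. apply HnK. exists n. auto. }
      destruct (RA_exists r Hr Hst) as [p Hp].
      apply (HS p). apply (build_S (RA r)); auto.
      * apply RA_range; auto.
      * intros u Hu. apply RA_fwd; auto.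
      * intros u Hu. apply RA_bwd; auto.
  - intros H t HSt. destruct (H t) as [t0 [Ht0 Hf]].
    specialize (Hf (fun x => (hh t0 x, 0))).
    destruct Hf as [Hc _].
    + split; simpl. apply hh_cont. apply continuity_const. intros x y. reflexivity.
    + intros x. rewrite hh_per. auto.
    + simpl in Hc.
      set (T := fun k => Nat.iter k (Rmap a b c) t) in *.
      set (Hs := fun k => hh t0 (T k)) in *.
      assert (Hpair : forall k, Hs k + Hs (S k) <= 1 - kap).
      { intros k. unfold Hs, T. simpl. pose proof (S_forward_N t HSt k) as HN.
        rewrite Rmap_step by auto. apply pair_bound. unfold sh. destruct (Rlt_dec _ _); auto. }
      assert (Hsum : forall m, sum_f_R0 Hs (2 * m + 1) <= INR (S m) * (1 - kap)).
      { induction m.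
        - simpl. pose proof (Hpair 0%nat). lra.
        - replace (2 * S m + 1)%nat with (S (S (2 * m + 1))) by lia.
          rewrite !tech5, S_INR.
          pose proof (Hpair (S (2 * m + 1))). lra. }
      destruct kap_props as [[K0 K1] _].
      rewrite hh_t0 in Hc.
      destruct (Hc ((1 - kap) / 2) ltac:(lra)) as [N HN].
      specialize (HN (2 * N + 1)%nat ltac:(lia)).
      unfold R_dist, cesaro in HN. apply Rabs_def2 in HN.
      specialize (Hsum N). fold Hs in HN.
      replace (S (2 * N + 1)) with (2 * S N)%nat in HN by lia.
      rewrite mult_INR in HN. simpl (INR 2) in HN.
      assert (HP : 0 < INR (S N)) by (apply lt_0_INR; lia).
      assert (sum_f_R0 Hs (2 * N + 1) / (2 * INR (S N)) <= (1 - kap) / 2).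
      { apply (Rmult_le_reg_r (2 * INR (S N))); [lra|].
        replace (sum_f_R0 Hs (2 * N + 1) / (2 * INR (S N)) * (2 * INR (S N))) with (sum_f_R0 Hs (2 * N + 1)) by (field; lra).
        nra. }
      change (fun k : nat => hh t0 (Nat.iter k (Rmap a b c) t)) with Hs in HN. replace (1 + 1) with 2 in HN by ring. lra.
Qed.

End Main.

Theorem theoremC1 (a b c : R) :
  0 < a -> 0 < b -> 0 < c -> a < b -> b < c ->
  b - a < c0 b c -> c0 b c < a ->
  0 < IZR (Rfloor (c / b)) * b - IZR (Rfloor (IZR (Rfloor (c / b)) * b / a)) * a ->
  IZR (Rfloor (c / b)) * b - IZR (Rfloor (IZR (Rfloor (c / b)) * b / a)) * a < 2 * a - b ->
  (Rfloor (c / b) >= 2)%Z ->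
  ((forall t : R, ~ in_S a b c t) <->
   (forall t : R, exists t0 : R,
       c0 b c + a - b <= t0 < c0 b c /\
       forall f : R -> Cplx, cont_C f -> periodic_C a f ->
         cesaro_lim_C f (fun k => Nat.iter k (Rmap a b c) t) (f t0))).
Proof.
  intros. apply main_iff; assumption.
Qed.
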